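(* For every $n \geq 2$, the set $\{Der_n\}$ of deranged linear arrangements of $\{1,\ldots,n\}$ is equidistributed.
   Context: A linear arrangement of $\{1,\ldots,n\}$ is a sequence $a_1\cdots a_n$ in which each of $1,\ldots,n$ appears exactly once; it is deranged if $a_t \neq t$ for all $t$. For a set $X$ of linear arrangements of $\{1,\ldots,n\}$ and $i\in\{1,\ldots,n\}$, the class $X^{(i)}$ is the set of arrangements in $X$ whose first entry is $i$. $X$ is called equidistributed if it is partitioned into its nonempty classes and all nonempty classes $X^{(i)}$ have the same cardinality. *)

(* Defs.v *)
From mathcomp Require Import all_boot all_fingroup.
Set Implicit Arguments. Unset Strict Implicit. Unset Printing Implicit Defensive.

(* A linear arrangement a_1 ... a_n of {1,...,n} is encoded (0-indexed) as a
   permutation s : {perm 'I_n}, with a_t = (s (t-1)) + 1.  Thus a_t <> t iff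
   s (t-1) <> t-1, and the first entry a_1 is (s 0) + 1. *)

Definition Der (n : nat) : {set {perm 'I_n}} :=
  [set s : {perm 'I_n} | [forall t : 'I_n, s t != t]].

Definition arr_class (n : nat) (X : {set {perm 'I_n}}) (i : 'I_n)
  : {set {perm 'I_n}} :=
  [set s in X | [exists t : 'I_n, (nat_of_ord t == 0) && (s t == i)]].

Definition equidistributed (n : nat) (X : {set {perm 'I_n}}) : Prop :=
  partition [set arr_class X i | i : 'I_n & arr_class X i != set0] X /\
  (forall i j : 'I_n, arr_class X i != set0 -> arr_class X j != set0 ->
     #|arr_class X i| = #|arr_class X j|).

(* Main.v *)
Require Import Defs.
From mathcomp Require Import all_boot all_fingroup.

Lemma classE n (X : {set {perm 'I_n}}) i s :
  (s \in arr_class X i) = (s \in X) && [exists t : 'I_n, (nat_of_ord t == 0) && (s t == i)].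
Proof. by rewrite /arr_class inE. Qed.

Lemma class_ne n (i : 'I_n) (t : 'I_n) : nat_of_ord t = 0 ->
  arr_class (Der n) i != set0 -> t != i.
Proof.
move=> t0 /set0Pn [s]; rewrite classE inE => /andP [/forallP D /existsP [u /andP [/eqP u0 /eqP su]]].
have -> : t = u by apply: val_inj; rewrite /= t0 u0.
by rewrite -su eq_sym D.
Qed.

Lemma card_le n (i j : 'I_n) : arr_class (Der n) i != set0 -> arr_class (Der n) j != set0 ->
  #|arr_class (Der n) i| <= #|arr_class (Der n) j|.
Proof.
move=> ni nj.
pose f := fun s : {perm 'I_n} => (s ^ tperm i j)%g.
have finj : injective f by move=> a b; apply: conjg_inj.
rewrite -(card_imset _ finj); apply: subset_leq_card; apply/subsetP => x /imsetP [s].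
rewrite classE inE => /andP [/forallP D /existsP [t /andP [/eqP t0 /eqP st]]] ->.
rewrite classE inE; apply/andP; split.
  apply/forallP => u; rewrite /f.
  have -> : u = tperm i j (tperm i j u) by rewrite tpermK.
  rewrite permJ; apply/negP => /eqP /perm_inj E.
  by move: (D (tperm i j u)); rewrite E eqxx.
apply/existsP; exists t; rewrite t0 eqxx /=.
have ti := @class_ne n i t t0 ni; have tj := @class_ne n j t t0 nj.
have ht : tperm i j t = t by apply: tpermD; rewrite eq_sym.
by rewrite /f -{1}ht permJ st tpermL.
Qed.

Theorem proposition4p5 (n : nat) : 2 <= n -> equidistributed (Der n).
Proof.
move=> n2; split; last first.
  by move=> i j ni nj; apply/eqP; rewrite eqn_leq !card_le.
apply/and3P; split.
- apply/eqP/setP => s; apply/bigcupP/idP.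
    by move=> [A /imsetP [i _ ->]]; rewrite classE => /andP [].
  move=> sX.
  have t0 : 0 < n by apply: leq_trans n2.
  pose t := Ordinal t0.
  have sc : s \in arr_class (Der n) (s t).
    by rewrite classE sX; apply/existsP; exists t; rewrite !eqxx.
  exists (arr_class (Der n) (s t)) => //.
  apply/imsetP; exists (s t) => //; rewrite inE; apply/set0Pn; by exists s.
- apply/trivIsetP => A B /imsetP [i _ ->] /imsetP [j _ ->] neq.
  rewrite -setI_eq0; apply/eqP/setP => s; rewrite inE in_set0 !classE.
  apply/negP => /andP [/andP [_ /existsP [t /andP [/eqP t0 /eqP st]]] /andP [_ /existsP [u /andP [/eqP u0 /eqP su]]]].
  have tu : t = u by apply: val_inj; rewrite /= t0 u0.
  by move: neq; rewrite -st -su tu eqxx.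
- apply/imsetP => [[i]]; rewrite inE => ne e.
  by move: ne; rewrite -e eqxx.
Qed.
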